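(* Let $P$ be a continuous $L$-ordered set. Then (1) $({\rm pt}_L\sigma_L(P),{\rm sub}_{\sigma_L(P)})$ is a continuous $L$-dcpo; (2) the Scott $L$-topology of $({\rm pt}_L\sigma_L(P),{\rm sub}_{\sigma_L(P)})$ coincides with the spectral $L$-topology $\mathcal O{\rm pt}_L\sigma_L(P)$, i.e., $\sigma_L({\rm pt}_L\sigma_L(P))=\mathcal O{\rm pt}_L\sigma_L(P)$.
   Context: $L$ is a frame with implication $\to$. $L$-subsets: maps to $L$; ${\rm sub}_X(A,B)=\bigwedge_xA(x)\to B(x)$. $L$-order $e$ on $P$: $e(x,x)=1$, $e(x,y)\wedge e(y,z)\le e(x,z)$, $e(x,y)\wedge e(y,x)=1\Rightarrow x=y$. ${\downarrow}y(x)=e(x,y)$; $\sqcup A=x$ iff $e(x,y)={\rm sub}_P(A,{\downarrow}y)$ for all $y$; directed: $\bigvee D=1$ and $D(x)\wedge D(y)\le\bigvee_zD(z)\wedge e(x,z)\wedge e(y,z)$; ideal: directed lower set; $L$-dcpo: every directed $L$-subset has a supremum; ${\Downarrow}x(y)=\bigwedge\{e(x,\sqcup I)\to I(y):I\text{ ideal with a supremum}\}$; continuous $L$-ordered set: each ${\Downarrow}x$ directed with supremum $x$; continuous $L$-dcpo: continuous $L$-ordered set that is an $L$-dcpo. Scott $L$-topology $\sigma_L(P)$: upper sets $A$ ($A(x)\wedge e(x,y)\le A(y)$) with $A(\sqcup D)=\bigvee_xA(x)\wedge D(x)$ for every directed $D$ having a supremum. ${\rm pt}_L\sigma_L(P)$: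 the set of maps $p:\sigma_L(P)\to L$ preserving binary meets and arbitrary joins with $p(\lambda_P)=\lambda$ for constants; $L$-ordered by ${\rm sub}_{\sigma_L(P)}(p,q)=\bigwedge_{A\in\sigma_L(P)}p(A)\to q(A)$; its spectral $L$-topology $\mathcal O{\rm pt}_L\sigma_L(P)=\{\phi(A):A\in\sigma_L(P)\}$ with $\phi(A)(p)=p(A)$. *)

(* Defs.v *)
Set Implicit Arguments.
Unset Strict Implicit.

Record frame := Frame {
  car :> Type;
  le : car -> car -> Prop;
  le_refl : forall a, le a a;
  le_trans : forall a b c, le a b -> le b c -> le a c;
  le_antisym : forall a b, le a b -> le b a -> a = b;
  sup : (car -> Prop) -> car;
  sup_ub : forall (S : car -> Prop) a, S a -> le a (sup S);
  sup_least : forall (S : car -> Prop) b, (forall a, S a -> le a b) -> le (sup S) b;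
  meet : car -> car -> car;
  meet_lb1 : forall a b, le (meet a b) a;
  meet_lb2 : forall a b, le (meet a b) b;
  meet_glb : forall a b c, le c a -> le c b -> le c (meet a b);
  frame_distr : forall a (S : car -> Prop),
    meet a (sup S) = sup (fun c => exists s, S s /\ c = meet a s);
  impl : car -> car -> car;
  impl_adj : forall a b c, le (meet a b) c <-> le a (impl b c)
}.

Section LTheory.
Variable L : frame.

Definition top : L := sup (fun _ : L => True).
Definition inf (S : L -> Prop) : L := sup (fun a => forall b, S b -> le a b).
Definition wsup (I : Type) (f : I -> L) : L := sup (fun a => exists i, a = f i).
Definition winf (I : Type) (f : I -> L) : L := inf (fun a => exists i, a = f i).

Definition subL (X : Type) (A B : X -> L) : L := winf (fun x => impl (A x) (B x)).

Section Ordered.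
Variables (P : Type) (e : P -> P -> L).

Definition is_Lorder : Prop :=
  (forall x, e x x = top) /\
  (forall x y z, le (meet (e x y) (e y z)) (e x z)) /\
  (forall x y, meet (e x y) (e y x) = top -> x = y).

Definition down (y : P) : P -> L := fun x => e x y.

Definition is_supL (A : P -> L) (x : P) : Prop :=
  forall y, e x y = subL A (down y).

Definition directed (D : P -> L) : Prop :=
  wsup D = top /\
  forall x y, le (meet (D x) (D y))
                 (wsup (fun z => meet (D z) (meet (e x z) (e y z)))).

Definition lower_set (A : P -> L) : Prop :=
  forall x y, le (meet (A x) (e y x)) (A y).

Definition upper_set (A : P -> L) : Prop :=
  forall x y, le (meet (A x) (e x y)) (A y).

Definition ideal (I : P -> L) : Prop := directed I /\ lower_set I.

Definition Ldcpo : Prop :=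
  forall D, directed D -> exists x, is_supL D x.

Definition wayb (x : P) : P -> L := fun y =>
  inf (fun a => exists (I : P -> L) (s : P),
         ideal I /\ is_supL I s /\ a = impl (e x s) (I y)).

Definition continuous_Lset : Prop :=
  forall x, directed (wayb x) /\ is_supL (wayb x) x.

Definition continuous_Ldcpo : Prop := continuous_Lset /\ Ldcpo.

Definition scott_open (A : P -> L) : Prop :=
  upper_set A /\
  forall D s, directed D -> is_supL D s ->
    A s = wsup (fun x => meet (A x) (D x)).

End Ordered.

Definition sopen (P : Type) (e : P -> P -> L) := { A : P -> L | scott_open e A }.

(* L-points of sigma_L(P): maps preserving binary meets, arbitrary joins and
   constants (meets / joins / constants of sigma_L(P) are pointwise). *)
Definition is_Lpoint (P : Type) (e : P -> P -> L) (p : sopen e -> L) : Prop :=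
  (forall A B C : sopen e,
     (forall x, proj1_sig C x = meet (proj1_sig A x) (proj1_sig B x)) ->
     p C = meet (p A) (p B)) /\
  (forall (S : sopen e -> Prop) (C : sopen e),
     (forall x, proj1_sig C x = wsup (fun A : {A : sopen e | S A} => proj1_sig (proj1_sig A) x)) ->
     p C = wsup (fun A : {A : sopen e | S A} => p (proj1_sig A))) /\
  (forall (l : L) (C : sopen e), (forall x, proj1_sig C x = l) -> p C = l).

Definition ptL (P : Type) (e : P -> P -> L) := { p : sopen e -> L | is_Lpoint p }.

Definition pt_order (P : Type) (e : P -> P -> L) (p q : ptL e) : L :=
  subL (fun A : sopen e => proj1_sig p A) (fun A => proj1_sig q A).

Definition spectral_open (P : Type) (e : P -> P -> L) (U : ptL e -> L) : Prop :=
  exists A : sopen e, forall p : ptL e, U p = proj1_sig p A.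

End LTheory.

(* Main.v *)
Require Import Defs.
From Stdlib Require Import FunctionalExtensionality ProofIrrelevance.
Set Implicit Arguments.
Unset Strict Implicit.

Section FrameLemmas.
Variable L : frame.
Implicit Types a b c d : L.

Lemma top_max a : le a (top L).
Proof. unfold top. apply sup_ub. exact I. Qed.

Lemma le_top_eq a : le (top L) a -> a = top L.
Proof. intro H. apply le_antisym; auto using top_max. Qed.

Lemma inf_lb (S : L -> Prop) b : S b -> le (inf S) b.
Proof. intro H. unfold inf. apply sup_least. intros a Ha. apply Ha, H. Qed.

Lemma inf_glb (S : L -> Prop) a : (forall b, S b -> le a b) -> le a (inf S).
Proof. intro H. unfold inf. apply sup_ub. exact H. Qed.

Lemma wsup_ub I (f : I -> L) i : le (f i) (wsup f).
Proof. unfold wsup. apply sup_ub. eauto. Qed.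

Lemma wsup_intro I (f : I -> L) i a : le a (f i) -> le a (wsup f).
Proof. intro H. eapply le_trans; [exact H| apply wsup_ub]. Qed.

Lemma wsup_least I (f : I -> L) a : (forall i, le (f i) a) -> le (wsup f) a.
Proof. intro H. unfold wsup. apply sup_least. intros b [i ->]. apply H. Qed.

Lemma winf_lb I (f : I -> L) i : le (winf f) (f i).
Proof. unfold winf. apply inf_lb. eauto. Qed.

Lemma winf_glb I (f : I -> L) a : (forall i, le a (f i)) -> le a (winf f).
Proof. intro H. unfold winf. apply inf_glb. intros b [i ->]. apply H. Qed.

Lemma meet_mono a b c d : le a c -> le b d -> le (meet a b) (meet c d).
Proof.
  intros H1 H2. apply meet_glb.
  - eapply le_trans; [apply meet_lb1|exact H1].
  - eapply le_trans; [apply meet_lb2|exact H2].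
Qed.

Lemma impl_mp a b : le (meet (impl a b) a) b.
Proof. apply impl_adj. apply le_refl. Qed.

Lemma impl_intro a b c : le (meet c a) b -> le c (impl a b).
Proof. intro H. apply impl_adj. exact H. Qed.

Lemma meet_top a : meet a (top L) = a.
Proof. apply le_antisym. apply meet_lb1. apply meet_glb. apply le_refl. apply top_max. Qed.

Lemma impl_top_le b : le (impl (top L) b) b.
Proof. rewrite <- (meet_top (impl (top L) b)). apply impl_mp. Qed.

Lemma subL_lb X (A B : X -> L) x : le (meet (subL A B) (A x)) (B x).
Proof.
  eapply le_trans; [|apply (impl_mp (A x) (B x))].
  apply meet_mono; [apply (winf_lb (fun x => impl (A x) (B x)))|apply le_refl].
Qed.

Lemma subL_glb X (A B : X -> L) c : (forall x, le (meet c (A x)) (B x)) -> le c (subL A B).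
Proof. intro H. unfold subL. apply winf_glb. intro x. apply impl_intro. apply H. Qed.

Lemma distr_le a I (f : I -> L) : le (meet a (wsup f)) (wsup (fun i => meet a (f i))).
Proof.
  unfold wsup at 1. rewrite frame_distr. apply sup_least.
  intros c [s [[i ->] ->]]. apply (wsup_ub (fun i => meet a (f i)) i).
Qed.

Lemma meet_wsup_r a I (f : I -> L) c : (forall i, le (meet a (f i)) c) -> le (meet a (wsup f)) c.
Proof. intro H. eapply le_trans; [apply distr_le|]. apply wsup_least. exact H. Qed.

Lemma meetC_le a b : le (meet a b) (meet b a).
Proof. apply meet_glb; [apply meet_lb2|apply meet_lb1]. Qed.

Lemma meet_wsup_l a I (f : I -> L) c : (forall i, le (meet (f i) a) c) -> le (meet (wsup f) a) c.
Proof.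
  intro H. eapply le_trans; [apply meetC_le|]. apply meet_wsup_r.
  intro i. eapply le_trans; [apply meetC_le|]. apply H.
Qed.

End FrameLemmas.

Ltac mtac := solve [
  match goal with
  | |- le _ (top _) => apply top_max
  | |- le ?a ?a => apply le_refl
  | |- le ?a (meet ?b ?c) => apply meet_glb; mtac
  | |- le (meet ?a ?b) ?c =>
      first [ apply (le_trans (meet_lb1 a b)); mtac
            | apply (le_trans (meet_lb2 a b)); mtac ]
  end].

Ltac ltr X := apply (@le_trans _ _ X); [try mtac|].

Section Generic.
Variable L : frame.
Variables (P : Type) (e : P -> P -> L).
Hypothesis Hr : forall x, e x x = top L.
Hypothesis Ht : forall x y z, le (meet (e x y) (e y z)) (e x z).

Lemma sup_ub_gen D s x : is_supL e D s -> le (D x) (e x s).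
Proof.
  intro Hs. ltr (meet (subL D (down e s)) (D x)).
  - apply meet_glb; [|apply le_refl]. rewrite <- (Hs s), Hr. apply top_max.
  - apply (subL_lb D (down e s) x).
Qed.

Lemma wayb_ideal_le I s x y : ideal e I -> is_supL e I s ->
  le (meet (wayb e y x) (e y s)) (I x).
Proof.
  intros HI Hs. ltr (meet (impl (e y s) (I x)) (e y s)).
  - apply meet_mono; [|apply le_refl]. apply inf_lb. exists I, s. auto.
  - apply impl_mp.
Qed.

Lemma wayb_ideal_le' I s x : ideal e I -> is_supL e I s -> le (wayb e s x) (I x).
Proof.
  intros HI Hs. ltr (meet (wayb e s x) (e s s)).
  - apply meet_glb; [apply le_refl|]. rewrite Hr. apply top_max.
  - apply wayb_ideal_le; auto.
Qed.

Lemma principal_ideal y : ideal e (down e y) /\ is_supL e (down e y) y.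
Proof.
  unfold down. split; [split; [split|]|].
  - apply le_antisym; [apply top_max|]. apply (wsup_intro (i:=y)). rewrite Hr. apply le_refl.
  - intros a b. apply (wsup_intro (i:=y)). rewrite Hr. apply meet_glb; [apply top_max|]. apply meet_glb; mtac.
  - intros a b. ltr (meet (e b a) (e a y)). apply Ht.
  - intro w. apply le_antisym.
    + apply subL_glb. intro x. ltr (meet (e x y) (e y w)). apply Ht.
    + ltr (meet (subL (fun x => e x y) (down e w)) (e y y)).
      * apply meet_glb; [apply le_refl|]. rewrite Hr. apply top_max.
      * apply (subL_lb (fun x => e x y) (down e w) y).
Qed.

Lemma wayb_le y x : le (wayb e y x) (e x y).
Proof.
  destruct (principal_ideal y) as [HI Hs].
  apply (wayb_ideal_le' x HI Hs).
Qed.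

Lemma wayb_upper y z x : le (meet (wayb e y x) (e y z)) (wayb e z x).
Proof.
  apply inf_glb. intros b [I [s [HI [Hs ->]]]]. apply impl_intro.
  ltr (meet (wayb e y x) (e y s)).
  - apply meet_glb; [mtac|]. ltr (meet (e y z) (e z s)). apply Ht.
  - apply wayb_ideal_le; auto.
Qed.

Lemma wayb_lower y x x' : le (meet (wayb e y x) (e x' x)) (wayb e y x').
Proof.
  apply inf_glb. intros b [I [s [HI [Hs ->]]]]. apply impl_intro.
  ltr (meet (I x) (e x' x)).
  - apply meet_glb; [|mtac]. ltr (meet (wayb e y x) (e y s)). apply wayb_ideal_le; auto.
  - apply (proj2 HI).
Qed.

Definition lclos (D : P -> L) : P -> L := fun y => wsup (fun z => meet (D z) (e y z)).

Lemma D_le_lclos D y : le (D y) (lclos D y).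
Proof. apply (wsup_intro (i:=y)). apply meet_glb; [apply le_refl|]. rewrite Hr. apply top_max. Qed.

Lemma lclos_ideal D s : directed e D -> is_supL e D s ->
  ideal e (lclos D) /\ is_supL e (lclos D) s.
Proof.
  intros [H1 H2] Hs. split; [split; [split|]|].
  - apply le_antisym; [apply top_max|]. rewrite <- H1. apply wsup_least. intro z.
    eapply le_trans; [apply D_le_lclos|]. apply (wsup_ub (lclos D) z).
  - intros a b. unfold lclos at 1 2. apply meet_wsup_l. intro z1. apply meet_wsup_r. intro z2.
    ltr (meet (meet (D z1) (D z2)) (meet (e a z1) (e b z2))).
    ltr (meet (wsup (fun z => meet (D z) (meet (e z1 z) (e z2 z)))) (meet (e a z1) (e b z2))).
    { apply meet_mono; [apply H2|apply le_refl]. }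
    apply meet_wsup_l. intro z. apply (wsup_intro (i:=z)). apply meet_glb; [|apply meet_glb].
    + ltr (D z). apply D_le_lclos.
    + ltr (meet (e a z1) (e z1 z)). apply Ht.
    + ltr (meet (e b z2) (e z2 z)). apply Ht.
  - intros x y. unfold lclos. apply meet_wsup_l. intro z. apply (wsup_intro (i:=z)).
    apply meet_glb; [mtac|]. ltr (meet (e y x) (e x z)). apply Ht.
  - intro w. apply le_antisym.
    + apply subL_glb. intro y. unfold lclos. apply meet_wsup_r. intro z.
      ltr (meet (e y z) (meet (D z) (e s w))).
      ltr (meet (e y z) (meet (e z s) (e s w))).
      { apply meet_mono; [apply le_refl|]. apply meet_mono; [apply sup_ub_gen; auto|apply le_refl]. }
      ltr (meet (e y z) (e z w)). { apply meet_glb; [mtac|]. ltr (meet (e z s) (e s w)). apply Ht. }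
      apply Ht.
    + rewrite (Hs w). apply subL_glb. intro z.
      ltr (meet (subL (lclos D) (down e w)) (lclos D z)).
      { apply meet_mono; [apply le_refl|apply D_le_lclos]. }
      apply subL_lb.
Qed.

Lemma sup_unique (Ha : forall x y, meet (e x y) (e y x) = top L -> x = y) D s t :
  is_supL e D s -> is_supL e D t -> s = t.
Proof.
  intros Hs Htt. apply Ha. rewrite (Hs t), <- (Htt t), (Htt s), <- (Hs s), !Hr.
  apply meet_top.
Qed.

End Generic.

Section Cont.
Variable L : frame.
Variables (P : Type) (e : P -> P -> L).
Hypothesis He : is_Lorder e.
Hypothesis Hc : continuous_Lset e.

Let Hr : forall x, e x x = top L := proj1 He.
Let Ht : forall x y z, le (meet (e x y) (e y z)) (e x z) := proj1 (proj2 He).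

Definition interp s : P -> L := fun x => wsup (fun y => meet (wayb e s y) (wayb e y x)).

Lemma interp_ideal s : ideal e (interp s) /\ is_supL e (interp s) s.
Proof.
  split; [split; [split|]|].
  - apply le_antisym; [apply top_max|]. rewrite <- (proj1 (proj1 (Hc s))).
    apply wsup_least. intro y.
    ltr (meet (wayb e s y) (wsup (wayb e y))).
    { apply meet_glb; [apply le_refl|]. rewrite (proj1 (proj1 (Hc y))). apply top_max. }
    apply meet_wsup_r. intro x. apply (wsup_intro (i:=x)). apply (wsup_intro (i:=y)). apply le_refl.
  - intros a b. unfold interp at 1 2. apply meet_wsup_l. intro y1. apply meet_wsup_r. intro y2.
    ltr (meet (meet (wayb e s y1) (wayb e s y2)) (meet (wayb e y1 a) (wayb e y2 b))).
    ltr (meet (wsup (fun y3 => meet (wayb e s y3) (meet (e y1 y3) (e y2 y3)))) (meet (wayb e y1 a) (wayb e y2 b))).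
    { apply meet_mono; [apply (proj2 (proj1 (Hc s)))|apply le_refl]. }
    apply meet_wsup_l. intro y3.
    ltr (meet (wayb e s y3) (meet (wayb e y3 a) (wayb e y3 b))).
    { apply meet_glb; [mtac|apply meet_glb].
      - ltr (meet (wayb e y1 a) (e y1 y3)). apply wayb_upper; auto.
      - ltr (meet (wayb e y2 b) (e y2 y3)). apply wayb_upper; auto. }
    ltr (meet (wayb e s y3) (wsup (fun c => meet (wayb e y3 c) (meet (e a c) (e b c))))).
    { apply meet_mono; [apply le_refl|apply (proj2 (proj1 (Hc y3)))]. }
    apply meet_wsup_r. intro c. apply (wsup_intro (i:=c)). apply meet_glb; [|mtac].
    apply (wsup_intro (i:=y3)). mtac.
  - intros x y. unfold interp. apply meet_wsup_l. intro z. apply (wsup_intro (i:=z)).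
    apply meet_glb; [mtac|]. ltr (meet (wayb e z x) (e y x)). apply wayb_lower; auto.
  - intro w. apply le_antisym.
    + apply subL_glb. intro x. unfold interp. apply meet_wsup_r. intro y.
      ltr (meet (e x y) (meet (e y s) (e s w))).
      { apply meet_glb; [|apply meet_glb; [|mtac]].
        - ltr (wayb e y x). apply wayb_le; auto.
        - ltr (wayb e s y). apply wayb_le; auto. }
      ltr (meet (e x y) (e y w)). { apply meet_glb; [mtac|]. ltr (meet (e y s) (e s w)). apply Ht. }
      apply Ht.
    + rewrite (proj2 (Hc s) w). apply subL_glb. intro y.
      change (down e w y) with (e y w). rewrite (proj2 (Hc y) w). apply subL_glb. intro x.
      ltr (meet (subL (interp s) (down e w)) (interp s x)).
      { apply meet_glb; [mtac|]. apply (wsup_intro (i:=y)). mtac. }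
      apply subL_lb.
Qed.

Lemma interpolation s x : le (wayb e s x) (interp s x).
Proof. destruct (interp_ideal s). apply wayb_ideal_le'; auto. Qed.

Lemma upx_open x : scott_open e (fun y => wayb e y x).
Proof.
  split.
  - intros y z. apply wayb_upper; auto.
  - intros D s HD Hs. apply le_antisym.
    + eapply le_trans; [apply interpolation|]. apply wsup_least. intro y.
      destruct (lclos_ideal Hr Ht HD Hs) as [HI HIs].
      ltr (meet (lclos e D y) (wayb e y x)).
      { apply meet_mono; [apply wayb_ideal_le'; auto|apply le_refl]. }
      unfold lclos. apply meet_wsup_l. intro z. apply (wsup_intro (i:=z)).
      apply meet_glb; [|mtac]. ltr (meet (wayb e y x) (e y z)). apply wayb_upper; auto.
    + apply wsup_least. intro y. ltr (meet (wayb e y x) (e y s)).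
      { apply meet_mono; [apply le_refl|apply sup_ub_gen; auto]. }
      apply wayb_upper; auto.
Qed.

Lemma open_approx B y : scott_open e B -> B y = wsup (fun x => meet (B x) (wayb e y x)).
Proof. intro HB. apply (proj2 HB); apply Hc. Qed.

End Cont.

Section Pt.
Variable L : frame.
Variables (P : Type) (e : P -> P -> L).

Notation so := (sopen e).
Notation sv A := (proj1_sig A).
Notation pv p := (proj1_sig p).

Lemma meet_idem a : meet a a = a :> L.
Proof. apply le_antisym; [apply meet_lb1|apply meet_glb; apply le_refl]. Qed.

Lemma sconst_open (l : L) : scott_open e (fun _ => l).
Proof.
  split.
  - intros x y. apply meet_lb1.
  - intros D s [H1 _] _. apply le_antisym.
    + ltr (meet l (wsup D)). { apply meet_glb; [apply le_refl|]. rewrite H1. apply top_max. }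
      apply distr_le.
    + apply wsup_least. intro. apply meet_lb1.
Qed.
Definition sconst (l : L) : so := exist _ _ (sconst_open l).

Lemma smeet_open (A B : so) : scott_open e (fun x => meet (sv A x) (sv B x)).
Proof.
  destruct A as [A [HAu HA]], B as [B [HBu HB]]; simpl. split.
  - intros x y. apply meet_glb.
    + ltr (meet (A x) (e x y)). apply HAu.
    + ltr (meet (B x) (e x y)). apply HBu.
  - intros D s HD Hs. apply le_antisym.
    + rewrite (HA D s HD Hs), (HB D s HD Hs).
      apply meet_wsup_l. intro x. apply meet_wsup_r. intro y.
      ltr (meet (meet (A x) (B y)) (meet (D x) (D y))).
      ltr (meet (meet (A x) (B y)) (wsup (fun z => meet (D z) (meet (e x z) (e y z))))).
      { apply meet_mono; [apply le_refl|apply (proj2 HD)]. }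
      apply meet_wsup_r. intro z. apply (wsup_intro (i:=z)).
      apply meet_glb; [apply meet_glb|mtac].
      * ltr (meet (A x) (e x z)). apply HAu.
      * ltr (meet (B y) (e y z)). apply HBu.
    + apply wsup_least. intro x. apply meet_glb.
      * rewrite (HA D s HD Hs). apply (wsup_intro (i:=x)). mtac.
      * rewrite (HB D s HD Hs). apply (wsup_intro (i:=x)). mtac.
Qed.
Definition smeet (A B : so) : so := exist _ _ (smeet_open A B).

Lemma sjoin_open I (F : I -> so) : scott_open e (fun x => wsup (fun i => sv (F i) x)).
Proof.
  split.
  - intros x y. apply meet_wsup_l. intro i. apply (wsup_intro (i:=i)).
    apply (proj1 (proj2_sig (F i))).
  - intros D s HD Hs. apply le_antisym.
    + apply wsup_least. intro i. rewrite (proj2 (proj2_sig (F i)) D s HD Hs).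
      apply wsup_least. intro x. apply (wsup_intro (i:=x)).
      apply meet_mono; [apply (wsup_ub (fun i => sv (F i) x) i)|apply le_refl].
    + apply wsup_least. intro x. apply meet_wsup_l. intro i. apply (wsup_intro (i:=i)).
      rewrite (proj2 (proj2_sig (F i)) D s HD Hs). apply (wsup_intro (i:=x)). apply le_refl.
Qed.
Definition sjoin I (F : I -> so) : so := exist _ _ (sjoin_open F).

Section Point.
Variable p : so -> L.
Hypothesis Hp : is_Lpoint p.

Lemma pt_ext (A B : so) : (forall x, sv A x = sv B x) -> p A = p B.
Proof.
  intro H. symmetry. rewrite <- (meet_idem (p A)). apply (proj1 Hp).
  intro x. rewrite meet_idem. auto.
Qed.

Lemma pt_mono (A B : so) : (forall x, le (sv A x) (sv B x)) -> le (p A) (p B).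
Proof.
  intro H. rewrite ((proj1 Hp) A B A).
  - apply meet_lb2.
  - intro x. apply le_antisym; [apply meet_glb; [apply le_refl|apply H]|apply meet_lb1].
Qed.

Lemma pt_meet (A B C : so) : (forall x, sv C x = meet (sv A x) (sv B x)) -> p C = meet (p A) (p B).
Proof. apply (proj1 Hp). Qed.

Lemma pt_const (l : L) (C : so) : (forall x, sv C x = l) -> p C = l.
Proof. apply (proj2 (proj2 Hp)). Qed.

Lemma pt_cmeet (l : L) (B C : so) : (forall x, sv C x = meet l (sv B x)) -> p C = meet l (p B).
Proof.
  intro H. rewrite ((proj1 Hp) (sconst l) B C H). f_equal. apply pt_const. reflexivity.
Qed.

Lemma pt_join I (F : I -> so) (C : so) :
  (forall x, sv C x = wsup (fun i => sv (F i) x)) -> p C = wsup (fun i => p (F i)).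
Proof.
  intro H. rewrite ((proj1 (proj2 Hp)) (fun A => exists i, A = F i) C).
  - apply le_antisym.
    + apply wsup_least. intros [A [i ->]]. simpl. apply (wsup_ub (fun i => p (F i)) i).
    + apply wsup_least. intro i.
      apply (wsup_intro (i:=exist (fun A => exists i, A = F i) (F i) (ex_intro _ i eq_refl))).
      apply le_refl.
  - intro x. rewrite H. apply le_antisym.
    + apply wsup_least. intro i.
      apply (wsup_intro (i:=exist (fun A => exists i, A = F i) (F i) (ex_intro _ i eq_refl))).
      apply le_refl.
    + apply wsup_least. intros [A [i ->]]. simpl. apply (wsup_ub (fun i => sv (F i) x) i).
Qed.

End Point.

Notation pto := (@pt_order L P e).

Lemma pt_le (p q : ptL e) (A : so) : le (meet (pto p q) (pv p A)) (pv q A).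
Proof. apply (subL_lb (fun A => pv p A) (fun A => pv q A) A). Qed.

Lemma pt_refl (p : ptL e) : pto p p = top L.
Proof. apply le_top_eq. apply subL_glb. intro A. apply meet_lb2. Qed.

Lemma pt_trans (p q r : ptL e) : le (meet (pto p q) (pto q r)) (pto p r).
Proof.
  apply subL_glb. intro A. ltr (meet (pto q r) (meet (pto p q) (pv p A))).
  ltr (meet (pto q r) (pv q A)). { apply meet_mono; [apply le_refl|apply pt_le]. }
  apply pt_le.
Qed.

Lemma pt_eq (p q : ptL e) : (forall A, pv p A = pv q A) -> p = q.
Proof.
  destruct p as [p Hp], q as [q Hq]; simpl. intro H.
  assert (p = q) by (apply functional_extensionality; exact H). subst q.
  f_equal. apply proof_irrelevance.
Qed.

Lemma pt_Lorder : is_Lorder pto.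
Proof.
  split; [exact pt_refl|split; [exact pt_trans|]].
  intros p q H. apply pt_eq. intro A.
  assert (H1 : pto p q = top L) by (apply le_top_eq; rewrite <- H; apply meet_lb1).
  assert (H2 : pto q p = top L) by (apply le_top_eq; rewrite <- H; apply meet_lb2).
  apply le_antisym.
  - ltr (meet (pto p q) (pv p A)). { apply meet_glb; [rewrite H1; apply top_max|apply le_refl]. } apply pt_le.
  - ltr (meet (pto q p) (pv q A)). { apply meet_glb; [rewrite H2; apply top_max|apply le_refl]. } apply pt_le.
Qed.

Definition supt (D : ptL e -> L) : so -> L := fun B => wsup (fun q => meet (pv q B) (D q)).

Lemma supt_point D : directed pto D -> is_Lpoint (supt D).
Proof.
  intros [HD1 HD2]. unfold supt. split; [|split].
  - intros A B C H. apply le_antisym.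
    + apply wsup_least. intro q. rewrite (pt_meet (proj2_sig q) H).
      apply meet_glb; [apply (wsup_intro (i:=q))|apply (wsup_intro (i:=q))]; mtac.
    + apply meet_wsup_l. intro q. apply meet_wsup_r. intro r.
      ltr (meet (meet (pv q A) (pv r B)) (meet (D q) (D r))).
      ltr (meet (meet (pv q A) (pv r B)) (wsup (fun z => meet (D z) (meet (pto q z) (pto r z))))).
      { apply meet_mono; [apply le_refl|apply HD2]. }
      apply meet_wsup_r. intro z. apply (wsup_intro (i:=z)).
      rewrite (pt_meet (proj2_sig z) H). apply meet_glb; [apply meet_glb|mtac].
      * ltr (meet (pto q z) (pv q A)). apply pt_le.
      * ltr (meet (pto r z) (pv r B)). apply pt_le.
  - intros S C H. apply le_antisym.
    + apply wsup_least. intro q. rewrite ((proj1 (proj2 (proj2_sig q))) S C H).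
      apply meet_wsup_l. intro A. apply (wsup_intro (i:=A)). apply (wsup_intro (i:=q)). apply le_refl.
    + apply wsup_least. intro A. apply wsup_least. intro q. apply (wsup_intro (i:=q)).
      apply meet_mono; [|apply le_refl].
      rewrite ((proj1 (proj2 (proj2_sig q))) S C H). apply (wsup_ub (fun A : {A : so | S A} => pv q (proj1_sig A)) A).
  - intros l C H. apply le_antisym.
    + apply wsup_least. intro q. rewrite (pt_const (proj2_sig q) H). apply meet_lb1.
    + ltr (meet l (wsup D)). { apply meet_glb; [apply le_refl|]. rewrite HD1. apply top_max. }
      apply meet_wsup_r. intro q. apply (wsup_intro (i:=q)). rewrite (pt_const (proj2_sig q) H). apply le_refl.
Qed.

Definition supp D (HD : directed pto D) : ptL e := exist _ _ (supt_point HD).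

Lemma supp_sup D (HD : directed pto D) : is_supL pto D (supp HD).
Proof.
  intro y. apply le_antisym.
  - apply subL_glb. intro q. change (down pto y q) with (pto q y).
    apply subL_glb. intro A.
    ltr (meet (pto (supp HD) y) (pv (supp HD) A)).
    { apply meet_glb; [mtac|]. simpl. unfold supt. apply (wsup_intro (i:=q)). mtac. }
    apply pt_le.
  - apply subL_glb. intro A. simpl. unfold supt. apply meet_wsup_r. intro q.
    ltr (meet (pto q y) (pv q A)).
    { apply meet_glb; [|mtac]. ltr (meet (subL D (down pto y)) (D q)). apply (subL_lb D (down pto y) q). }
    apply pt_le.
Qed.

Lemma sup_formula D s : directed pto D -> is_supL pto D s ->
  forall B, pv s B = wsup (fun q => meet (pv q B) (D q)).
Proof.
  intros HD Hs B.
  assert (s = supp HD) by (eapply sup_unique; [apply pt_refl|apply (proj2 (proj2 pt_Lorder))|exact Hs|apply supp_sup]).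
  subst s. reflexivity.
Qed.

Lemma pt_dcpo : Ldcpo pto.
Proof. intros D HD. exists (supp HD). apply supp_sup. Qed.

Lemma spectral_scott (A : so) : scott_open pto (fun p => pv p A).
Proof.
  split.
  - intros p q. eapply le_trans; [apply meetC_le|]. apply pt_le.
  - intros D s HD Hs. apply (sup_formula HD Hs).
Qed.

Lemma eta_point (x : P) : is_Lpoint (fun A : so => sv A x).
Proof.
  split; [|split].
  - intros A B C H. apply H.
  - intros S C H. apply H.
  - intros l C H. apply H.
Qed.
Definition eta (x : P) : ptL e := exist _ _ (eta_point x).

End Pt.

Section Main.
Variable L : frame.
Variables (P : Type) (e : P -> P -> L).
Hypothesis He : is_Lorder e.
Hypothesis Hc : continuous_Lset e.
Let Hr : forall x, e x x = top L := proj1 He.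
Let Ht : forall x y z, le (meet (e x y) (e y z)) (e x z) := proj1 (proj2 He).

Notation so := (sopen e).
Notation sv A := (proj1_sig A).
Notation pv p := (proj1_sig p).
Notation pto := (@pt_order L P e).
Notation eta := (eta e).

Definition supx (x : P) : so := exist _ _ (upx_open He Hc x).

Lemma eta_mono x y : le (e x y) (pto (eta x) (eta y)).
Proof.
  apply subL_glb. intro B. simpl. eapply le_trans; [apply meetC_le|]. apply (proj1 (proj2_sig B)).
Qed.

Lemma pt_upx (r : ptL e) x : le (pv r (supx x)) (pto (eta x) r).
Proof.
  apply subL_glb. intro B. simpl.
  ltr (meet (sv B x) (pv r (supx x))).
  rewrite <- (pt_cmeet (proj2_sig r) (B:=supx x) (C:=smeet (sconst e (sv B x)) (supx x))) by reflexivity.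
  apply (pt_mono (proj2_sig r)). intro y. simpl.
  ltr (meet (sv B x) (e x y)). { apply meet_mono; [apply le_refl|apply wayb_le; auto]. }
  apply (proj1 (proj2_sig B)).
Qed.

Lemma pt_approx (p : ptL e) (B : so) :
  pv p B = wsup (fun x => meet (sv B x) (pv p (supx x))).
Proof.
  rewrite (pt_join (proj2_sig p) (F := fun x => smeet (sconst e (sv B x)) (supx x)) (C := B)).
  - f_equal. apply functional_extensionality. intro x. apply pt_cmeet. apply (proj2_sig p). reflexivity.
  - intro y. simpl. apply open_approx; auto. apply (proj2_sig B).
Qed.

Definition Dp (p : ptL e) : ptL e -> L :=
  fun q => wsup (fun x => meet (pv p (supx x)) (pto q (eta x))).

Lemma Dp_eta p x : le (pv p (supx x)) (Dp p (eta x)).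
Proof. apply (wsup_intro (i:=x)). rewrite pt_refl. apply meet_glb; [apply le_refl|apply top_max]. Qed.

Lemma Dp_dir p : directed pto (Dp p).
Proof.
  split.
  - apply le_antisym; [apply top_max|].
    ltr (pv p (sconst e (top L))). { rewrite (pt_const (proj2_sig p) (l:=top L)) by reflexivity. apply le_refl. }
    rewrite pt_approx. apply wsup_least. intro x. apply (wsup_intro (i:=eta x)).
    ltr (pv p (supx x)). apply Dp_eta.
  - intros a b. unfold Dp at 1 2. apply meet_wsup_l. intro x1. apply meet_wsup_r. intro x2.
    set (G := sjoin (fun z => smeet (sconst e (meet (e x1 z) (e x2 z))) (supx z))).
    ltr (meet (pv p G) (meet (pto a (eta x1)) (pto b (eta x2)))).
    { apply meet_glb; [|mtac].
      ltr (meet (pv p (supx x1)) (pv p (supx x2))).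
      rewrite <- (pt_meet (proj2_sig p) (C := smeet (supx x1) (supx x2))) by reflexivity.
      apply (pt_mono (proj2_sig p)). intro y. simpl.
      eapply le_trans; [apply (proj2 (proj1 (Hc y)))|].
      apply wsup_least. intro z. apply (wsup_intro (i:=z)). apply meetC_le. }
    rewrite (pt_join (proj2_sig p) (F := fun z => smeet (sconst e (meet (e x1 z) (e x2 z))) (supx z)) (C := G)) by reflexivity.
    apply meet_wsup_l. intro z. apply (wsup_intro (i:=eta z)).
    rewrite (pt_cmeet (proj2_sig p) (l := meet (e x1 z) (e x2 z)) (B := supx z)) by reflexivity.
    apply meet_glb; [|apply meet_glb].
    + ltr (pv p (supx z)). apply Dp_eta.
    + ltr (meet (pto a (eta x1)) (pto (eta x1) (eta z))).
      { apply meet_glb; [mtac|]. ltr (e x1 z). apply eta_mono. }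
      apply pt_trans.
    + ltr (meet (pto b (eta x2)) (pto (eta x2) (eta z))).
      { apply meet_glb; [mtac|]. ltr (e x2 z). apply eta_mono. }
      apply pt_trans.
Qed.

Lemma Dp_ideal p : ideal pto (Dp p) /\ is_supL pto (Dp p) p.
Proof.
  split; [split; [apply Dp_dir|]|].
  - intros q r. unfold Dp. apply meet_wsup_l. intro x. apply (wsup_intro (i:=x)).
    apply meet_glb; [mtac|]. ltr (meet (pto r q) (pto q (eta x))). apply pt_trans.
  - assert (E : p = supp (Dp_dir p)).
    { apply pt_eq. intro A. simpl. unfold supt. apply le_antisym.
      - rewrite pt_approx. apply wsup_least. intro x. apply (wsup_intro (i:=eta x)).
        apply meet_glb; [simpl; mtac|]. ltr (pv p (supx x)). apply Dp_eta.
      - apply wsup_least. intro q. unfold Dp. apply meet_wsup_r. intro x.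
        ltr (meet (pto (eta x) p) (pv (eta x) A)).
        { apply meet_glb.
          - ltr (pv p (supx x)). apply pt_upx.
          - simpl. ltr (meet (pto q (eta x)) (pv q A)). apply pt_le. }
        apply pt_le. }
    pose proof (supp_sup (Dp_dir p)) as HH. rewrite <- E in HH. exact HH.
Qed.

Lemma wayb_pt p : wayb pto p = Dp p.
Proof.
  apply functional_extensionality. intro q. apply le_antisym.
  - destruct (Dp_ideal p). apply wayb_ideal_le'; auto. apply pt_refl.
  - apply wsup_least. intro x. apply inf_glb. intros b [J [s [HJ [Hs ->]]]].
    apply impl_intro.
    ltr (meet (pto q (eta x)) (pv s (supx x))).
    { apply meet_glb; [mtac|]. ltr (meet (pto p s) (pv p (supx x))). apply pt_le. }
    rewrite (sup_formula (proj1 HJ) Hs). apply meet_wsup_r. intro r.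
    ltr (meet (J (eta x)) (pto q (eta x))).
    { apply meet_glb; [|mtac]. ltr (meet (J r) (pto (eta x) r)).
      { apply meet_glb; [mtac|]. ltr (pv r (supx x)). apply pt_upx. }
      apply (proj2 HJ). }
    apply (proj2 HJ).
Qed.

Lemma pt_cont : continuous_Lset pto.
Proof. intro p. rewrite wayb_pt. destruct (Dp_ideal p) as [[H1 _] H2]. auto. Qed.

Definition Dlift (D : P -> L) : ptL e -> L :=
  fun q => wsup (fun x => meet (D x) (pto q (eta x))).

Lemma Dlift_eta D x : le (D x) (Dlift D (eta x)).
Proof. apply (wsup_intro (i:=x)). rewrite pt_refl. apply meet_glb; [apply le_refl|apply top_max]. Qed.

Lemma Dlift_dir D : directed e D -> directed pto (Dlift D).
Proof.
  intros [HD1 HD2]. split.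
  - apply le_antisym; [apply top_max|]. rewrite <- HD1. apply wsup_least. intro x.
    apply (wsup_intro (i:=eta x)). apply Dlift_eta.
  - intros a b. unfold Dlift at 1 2. apply meet_wsup_l. intro x1. apply meet_wsup_r. intro x2.
    ltr (meet (meet (D x1) (D x2)) (meet (pto a (eta x1)) (pto b (eta x2)))).
    ltr (meet (wsup (fun z => meet (D z) (meet (e x1 z) (e x2 z)))) (meet (pto a (eta x1)) (pto b (eta x2)))).
    { apply meet_mono; [apply HD2|apply le_refl]. }
    apply meet_wsup_l. intro z. apply (wsup_intro (i:=eta z)).
    apply meet_glb; [|apply meet_glb].
    + ltr (D z). apply Dlift_eta.
    + ltr (meet (pto a (eta x1)) (pto (eta x1) (eta z))).
      { apply meet_glb; [mtac|]. ltr (e x1 z). apply eta_mono. }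
      apply pt_trans.
    + ltr (meet (pto b (eta x2)) (pto (eta x2) (eta z))).
      { apply meet_glb; [mtac|]. ltr (e x2 z). apply eta_mono. }
      apply pt_trans.
Qed.

Lemma Dlift_sup D s (HD : directed e D) : is_supL e D s -> is_supL pto (Dlift D) (eta s).
Proof.
  intro Hs.
  assert (E : eta s = supp (Dlift_dir HD)).
  { apply pt_eq. intro B. simpl. unfold supt. apply le_antisym.
    - rewrite (proj2 (proj2_sig B) D s HD Hs). apply wsup_least. intro x.
      apply (wsup_intro (i:=eta x)). apply meet_glb; [simpl; mtac|].
      ltr (D x). apply Dlift_eta.
    - apply wsup_least. intro q. unfold Dlift. apply meet_wsup_r. intro x.
      ltr (meet (sv B x) (e x s)).
      { apply meet_glb.
        - ltr (meet (pto q (eta x)) (pv q B)). apply (pt_le q (eta x) B).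
        - ltr (D x). apply sup_ub_gen; auto. }
      apply (proj1 (proj2_sig B)). }
  pose proof (supp_sup (Dlift_dir HD)) as HH. rewrite <- E in HH. exact HH.
Qed.

Lemma scott_spectral U : scott_open pto U -> spectral_open U.
Proof.
  intros [HUu HU].
  assert (HA : scott_open e (fun x => U (eta x))).
  { split.
    - intros x y. ltr (meet (U (eta x)) (pto (eta x) (eta y))).
      { apply meet_mono; [apply le_refl|apply eta_mono]. }
      apply HUu.
    - intros D s HD Hs. rewrite (HU (Dlift D) (eta s) (Dlift_dir HD) (Dlift_sup HD Hs)).
      apply le_antisym.
      + apply wsup_least. intro q. unfold Dlift. apply meet_wsup_r. intro x.
        apply (wsup_intro (i:=x)). apply meet_glb; [|mtac].
        ltr (meet (U q) (pto q (eta x))). apply HUu.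
      + apply wsup_least. intro x. apply (wsup_intro (i:=eta x)).
        apply meet_glb; [mtac|]. ltr (D x). apply Dlift_eta. }
  exists (exist _ _ HA). intro p.
  destruct (Dp_ideal p) as [[HD _] Hs].
  rewrite (HU (Dp p) p HD Hs), pt_approx. simpl. apply le_antisym.
  - apply wsup_least. intro q. unfold Dp. apply meet_wsup_r. intro x.
    apply (wsup_intro (i:=x)). apply meet_glb; [|mtac].
    ltr (meet (U q) (pto q (eta x))). apply HUu.
  - apply wsup_least. intro x. apply (wsup_intro (i:=eta x)).
    apply meet_glb; [mtac|]. ltr (pv p (supx x)). apply Dp_eta.
Qed.

End Main.

Theorem proposition6p3 (L : frame) (P : Type) (e : P -> P -> L) :
  is_Lorder e -> continuous_Lset e ->
  (is_Lorder (@pt_order L P e) /\ continuous_Ldcpo (@pt_order L P e)) /\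
  (forall U : ptL e -> L,
     scott_open (@pt_order L P e) U <-> spectral_open U).
Proof.
  intros He Hc. split.
  - split; [apply pt_Lorder|split; [apply pt_cont; auto|apply pt_dcpo]].
  - intro U. split.
    + apply scott_spectral; auto.
    + intros [A HA]. replace U with (fun p : ptL e => proj1_sig p A).
      * apply spectral_scott.
      * apply functional_extensionality. intro p. symmetry. apply HA.
Qed.
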